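(* Let $H\in(\tfrac12,1)$, $W$ a one-dimensional standard Wiener process, $\tilde B_t=\int_0^t(t-v)^{H-1/2}\,dW_v$, and $R(r,s)=\mathbb{E}\tilde B_r\tilde B_s$. Set $c_1=H-\tfrac12$, $c_3=(H-\tfrac12)(H-\tfrac32)$ and $c_2=-c_3\int_0^\infty u^{H-1/2}(1+u)^{H-5/2}\,du$. Then for $0<r<s$, $$\partial^2_{r,s}R(r,s)=c_1r^{H-1/2}s^{H-3/2}+c_2(s-r)^{2H-2}+c_3\int_r^\infty v^{H-1/2}(s-r+v)^{H-5/2}\,dv.$$
   Context: $\partial^2_{r,s}R=\frac{\partial^2}{\partial r\partial s}R$ denotes the mixed derivative of the covariance function. *)

(* Defs.v *)
From Stdlib Require Import Reals.
From Coquelicot Require Import Coquelicot.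
Open Scope R_scope.

(* Real power x^a for x > 0, extended by 0 for x <= 0 (only used with a > 0
   at x = 0, or on sets of measure zero). *)
Definition rpow (x a : R) : R :=
  if Rlt_dec 0 x then Rpower x a else 0.

(* Covariance of the Riemann-Liouville process B~_t = int_0^t (t-v)^(H-1/2) dW_v,
   computed by the Ito (Wiener) isometry:
   R(r,s) = E[B~_r B~_s] = int_0^{min r s} (r-v)^(H-1/2) (s-v)^(H-1/2) dv. *)
Definition RLcov (H r s : R) : R :=
  RInt (fun v => rpow (r - v) (H - 1/2) * rpow (s - v) (H - 1/2)) 0 (Rmin r s).

Definition cst1 (H : R) : R := H - 1/2.
Definition cst3 (H : R) : R := (H - 1/2) * (H - 3/2).
Definition cst2 (H : R) : R :=
  - cst3 H * RInt_gen (fun u => rpow u (H - 1/2) * rpow (1 + u) (H - 5/2))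
                    (at_point 0) (Rbar_locally p_infty).

(* Main.v *)
Require Import Defs.
From Stdlib Require Import Reals Lra.
From Coquelicot Require Import Coquelicot.
Open Scope R_scope.
Ltac req := match goal with |- ?A = ?B => change (@eq R A B) end.

Lemma loc_gt (c x : R) : c < x -> locally x (fun y => c < y).
Proof.
  intros H. exists (mkposreal _ (proj2 (Rlt_0_minus _ _) H)). intros y Hy.
  apply Rabs_lt_between' in Hy. simpl in Hy. lra.
Qed.

Lemma loc_lt (c x : R) : x < c -> locally x (fun y => y < c).
Proof.
  intros H. exists (mkposreal _ (proj2 (Rlt_0_minus _ _) H)). intros y Hy.
  apply Rabs_lt_between' in Hy. simpl in Hy. lra.
Qed.

Lemma rpow_pos_eq x e : 0 < x -> rpow x e = Rpower x e.
Proof. intros H. unfold rpow. destruct (Rlt_dec 0 x); [reflexivity|lra]. Qed.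

Lemma rpow_nonpos x e : x <= 0 -> rpow x e = 0.
Proof. intros H. unfold rpow. destruct (Rlt_dec 0 x); [lra|reflexivity]. Qed.

Lemma rpow_gt0 x e : 0 < x -> 0 < rpow x e.
Proof. intros H. rewrite rpow_pos_eq by lra. apply exp_pos. Qed.

Lemma rpow_ge0 x e : 0 <= rpow x e.
Proof. unfold rpow. destruct (Rlt_dec 0 x). left; apply exp_pos. lra. Qed.

Lemma rpow_derive x e : 0 < x -> is_derive (fun y => rpow y e) x (e * rpow x (e - 1)).
Proof.
  intros H. rewrite rpow_pos_eq by lra.
  apply is_derive_ext_loc with (fun y => Rpower y e).
  - apply filter_imp with (2 := loc_gt 0 x H). intros y Hy. rewrite rpow_pos_eq; auto.
  - apply is_derive_Reals. apply derivable_pt_lim_power; auto.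
Qed.

Lemma rpow_cont_pos x e : 0 < x -> continuous (fun y => rpow y e) x.
Proof. intros H. apply (ex_derive_continuous (K:=R_AbsRing) (V:=R_NormedModule)). exists (e * rpow x (e-1)). apply rpow_derive; auto. Qed.

Lemma rpow_cont0 e : 0 < e -> continuous (fun y => rpow y e) 0.
Proof.
  intros He. apply filterlim_locally. intros eps.
  rewrite rpow_nonpos by lra.
  assert (Hd : 0 < exp (ln eps / e)) by apply exp_pos.
  exists (mkposreal _ Hd). intros y Hy. simpl in Hy.
  change (Rabs (rpow y e - 0) < eps).
  change (Rabs (y - 0) < exp (ln eps / e)) in Hy.
  destruct (Rle_dec y 0).
  - rewrite rpow_nonpos by lra. rewrite Rminus_0_r, Rabs_R0. apply cond_pos.
  - rewrite rpow_pos_eq by lra. rewrite Rminus_0_r, Rabs_right.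
    2: left; apply exp_pos.
    rewrite Rminus_0_r, Rabs_right in Hy by lra.
    unfold Rpower. rewrite <- (exp_ln eps) by apply cond_pos.
    apply exp_increasing.
    apply ln_increasing in Hy; [|lra]. rewrite ln_exp in Hy.
    apply (Rmult_lt_compat_l e) in Hy; auto.
    replace (e * (ln eps / e)) with (ln eps) in Hy by (field; lra). lra.
Qed.

Lemma rpow_cont e x : 0 < e -> continuous (fun y => rpow y e) x.
Proof.
  intros He. destruct (Rtotal_order x 0) as [Hx|[Hx|Hx]].
  - apply continuous_ext_loc with (fun _ => 0).
    + apply filter_imp with (2 := loc_lt 0 x Hx). intros y Hy. rewrite rpow_nonpos; lra.
    + apply continuous_const.
  - subst. apply rpow_cont0; auto.
  - apply rpow_cont_pos; auto.
Qed.

Lemma rpow_mult d w e : 0 < d -> rpow (d * w) e = rpow d e * rpow w e.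
Proof.
  intros Hd. destruct (Rle_dec w 0).
  - assert (d * w <= 0) by (rewrite <- (Rmult_0_r d); apply Rmult_le_compat_l; lra).
    rewrite (rpow_nonpos w), (rpow_nonpos (d*w)) by lra. ring.
  - assert (0 < d * w) by (apply Rmult_lt_0_compat; lra).
    rewrite !rpow_pos_eq by lra. rewrite Rpower_mult_distr; auto; lra.
Qed.

Lemma rpow_plus x e f : 0 < x -> rpow x e * rpow x f = rpow x (e + f).
Proof. intros H. rewrite !rpow_pos_eq by auto. rewrite Rpower_plus. ring. Qed.

Lemma rpow_le x y e : 0 <= e -> x <= y -> rpow x e <= rpow y e.
Proof.
  intros He Hxy. destruct (Rle_dec x 0).
  - rewrite (rpow_nonpos x) by auto. apply rpow_ge0.
  - rewrite !rpow_pos_eq by lra. apply Rle_Rpower_l; lra.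
Qed.

Definition Phi (a c k K e : R) (z v : R) : R := rpow v a * (K * rpow (c + k * z + v) e).
Definition DPhi (a c k K e : R) (z v : R) : R := rpow v a * (K * (e * rpow (c + k * z + v) (e - 1) * k)).

Lemma Phi_derive a c k K e z v : 0 < c + k * z + v ->
  is_derive (fun z => Phi a c k K e z v) z (DPhi a c k K e z v).
Proof.
  intros Hp. unfold Phi, DPhi.
  apply is_derive_scal. apply is_derive_scal.
  assert (Hl : is_derive (fun z => c + k*z + v) z k) by (auto_derive; auto; ring).
  pose proof (is_derive_comp (fun y => rpow y e) (fun z => c + k*z + v) z _ _ (rpow_derive _ e Hp) Hl) as HH.
  simpl in HH. unfold scal in HH; simpl in HH; unfold mult in HH; simpl in HH.
  replace (e * rpow (c + k * z + v) (e - 1) * k) with (k * (e * rpow (c + k * z + v) (e - 1))) by ring.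
  exact HH.
Qed.

Lemma Phi_Derive a c k K e z v : 0 < c + k * z + v ->
  Derive (fun z => Phi a c k K e z v) z = DPhi a c k K e z v.
Proof. intros Hp. apply is_derive_unique, Phi_derive; auto. Qed.

Lemma cont2d_lin c k x t : continuity_2d_pt (fun u v => c + k * u + v) x t.
Proof.
  apply continuity_2d_pt_plus. apply continuity_2d_pt_plus.
  apply continuity_2d_pt_const.
  apply continuity_2d_pt_mult. apply continuity_2d_pt_const. apply continuity_2d_pt_id1.
  apply continuity_2d_pt_id2.
Qed.

Lemma DPhi_cont2d a c k K e x t : 0 < a -> 0 < c + k * x + t ->
  continuity_2d_pt (fun u v => DPhi a c k K e u v) x t.
Proof.
  intros Ha Hp. unfold DPhi.
  apply continuity_2d_pt_mult.
  - apply (continuity_1d_2d_pt_comp (fun y => rpow y a) (fun u v => v)).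
    + apply continuity_pt_filterlim, rpow_cont; auto.
    + apply continuity_2d_pt_id2.
  - apply continuity_2d_pt_mult. apply continuity_2d_pt_const.
    apply continuity_2d_pt_mult. 2: apply continuity_2d_pt_const.
    apply continuity_2d_pt_mult. apply continuity_2d_pt_const.
    apply (continuity_1d_2d_pt_comp (fun y => rpow y (e-1)) (fun u v => c + k*u + v)).
    + apply continuity_pt_filterlim, rpow_cont_pos; auto.
    + apply cont2d_lin.
Qed.

Lemma DerPhi_cont2d a c k K e x t : 0 < a -> 0 < c + k * x + t ->
  continuity_2d_pt (fun u v => Derive (fun z => Phi a c k K e z v) u) x t.
Proof.
  intros Ha Hp.
  apply continuity_2d_pt_ext_loc with (fun u v => DPhi a c k K e u v).
  2: apply DPhi_cont2d; auto.
  assert (Hc := cont2d_lin c k x t (mkposreal _ Hp)).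
  destruct Hc as [d Hd]. exists d. intros u v Hu Hv.
  specialize (Hd u v Hu Hv). simpl in Hd.
  rewrite Phi_Derive; auto.
  apply Rabs_lt_between' in Hd. lra.
Qed.

Lemma Phi_cont_v a c k K e x t : 0 < a -> (0 < e \/ 0 < c + k * x + t) ->
  continuous (fun v => Phi a c k K e x v) t.
Proof.
  intros Ha He. unfold Phi.
  apply (continuous_mult (fun v => rpow v a) (fun v => K * rpow (c + k*x + v) e)).
  - apply rpow_cont; auto.
  - apply (continuous_scal_r K (fun v => rpow (c + k*x + v) e)).
    apply (continuous_comp (fun v => c + k*x + v) (fun y => rpow y e)).
    + apply (continuous_plus (fun _ => c + k*x) (fun v => v)).
      apply continuous_const. apply continuous_id.
    + destruct He. apply rpow_cont; auto. apply rpow_cont_pos; auto.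
Qed.

Lemma Phi_exRInt a c k K e x p q : 0 < a -> 0 < e -> ex_RInt (fun v => Phi a c k K e x v) p q.
Proof. intros Ha He. apply (ex_RInt_continuous (V:=R_CompleteNormedModule)). intros z _. apply Phi_cont_v; auto. Qed.

Lemma RLcov_eq H x s' : 0 < H - 1/2 -> x <= s' ->
  RLcov H x s' = RInt (fun u => Phi (H-1/2) s' (-1) 1 (H-1/2) x u) 0 x.
Proof.
  intros Ha Hx. unfold RLcov. rewrite Rmin_left by lra.
  set (a := H - 1/2) in *.
  set (f := fun u => Phi a s' (-1) 1 a x u).
  assert (Hex : ex_RInt f x 0) by (apply Phi_exRInt; auto).
  assert (H2 : is_RInt f (-1 * 0 + x) (-1 * x + x) (RInt f x 0)).
  { replace (-1 * x + x) with 0 by ring. replace (-1 * 0 + x) with x by ring.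
    apply (RInt_correct (V:=R_CompleteNormedModule)); auto. }
  apply is_RInt_comp_lin in H2.
  apply is_RInt_opp in H2.
  rewrite (opp_RInt_swap (V:=R_CompleteNormedModule)) in H2 by auto.
  apply is_RInt_unique. eapply is_RInt_ext; [|exact H2].
  intros y _. unfold f, Phi. unfold scal, opp; simpl. unfold mult; simpl.
  replace (s' + -1 * x + (-1 * y + x)) with (s' - y) by ring.
  replace (-1 * y + x) with (x - y) by ring. ring.
Qed.

Lemma RL_deriv H s' r : 0 < H - 1/2 -> 0 < r -> r < s' ->
  is_derive (fun x => RLcov H x s') r
    (RInt (fun t => DPhi (H-1/2) s' (-1) 1 (H-1/2) r t) 0 r + Phi (H-1/2) s' (-1) 1 (H-1/2) r r).
Proof.
  intros Ha Hr Hrs.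
  set (a := H - 1/2) in *.
  set (f := Phi a s' (-1) 1 a).
  apply is_derive_ext_loc with (fun x => RInt (fun t => f x t) 0 x).
  { apply filter_imp with (2 := loc_lt s' r Hrs). intros x Hx.
    rewrite RLcov_eq; [reflexivity|exact Ha|lra]. }
  assert (Hd := is_derive_RInt_param_bound_comp_aux3 f 0 (fun x => x) r 1).
  replace (RInt (fun t => DPhi a s' (-1) 1 a r t) 0 r)
    with (RInt (fun t => Derive (fun u => f u t) r) 0 r).
  2: { apply RInt_ext. intros t Ht.
       rewrite Rmin_left, Rmax_right in Ht by lra.
       unfold f. apply Phi_Derive. lra. }
  rewrite <- (Rmult_1_r (f r r)).
  apply Hd; clear Hd.
  - apply filter_forall. intros y. apply Phi_exRInt; auto.
  - exists (mkposreal 1 Rlt_0_1). apply filter_forall. intros y. apply Phi_exRInt; auto.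
  - apply (is_derive_id (K:=R_AbsRing)).
  - exists (mkposreal (r/2) ltac:(simpl; lra)).
    apply filter_imp with (2 := loc_lt s' r Hrs). intros x0 Hx0 t Ht. simpl in Ht.
    rewrite Rmin_left, Rmax_right in Ht by lra.
    eexists. apply Phi_derive. lra.
  - intros t Ht. rewrite Rmin_left, Rmax_right in Ht by lra.
    apply DerPhi_cont2d; auto; lra.
  - assert (Hs : 0 < s' / 4) by lra.
    exists (mkposreal _ Hs). intros u v Hu Hv. simpl in Hu, Hv.
    apply Rabs_lt_between' in Hu. apply Rabs_lt_between' in Hv.
    apply DerPhi_cont2d; auto; lra.
  - apply continuity_pt_filterlim. apply Phi_cont_v; auto.
Qed.

Lemma D_formula H a r s' : a = H - 1/2 -> 0 < a -> 0 < r -> r < s' ->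
  Derive (fun x => RLcov H x s') r
  = RInt (fun t => Phi a (-r) 1 (-a) (a-1) s' t) 0 r + rpow r a * rpow s' a.
Proof.
  intros Ea Ha Hr Hrs. subst a.
  etransitivity. { apply is_derive_unique. apply (RL_deriv H s' r Ha Hr Hrs). }
  apply f_equal2.
  - apply RInt_ext. intros t _. unfold DPhi, Phi.
    replace (s' + -1 * r + t) with (- r + 1 * s' + t) by ring. idtac.
    match goal with |- ?A = ?B => change (@eq R A B) end. ring.
  - unfold Phi. replace (s' + -1 * r + r) with s' by ring. match goal with |- ?A = ?B => change (@eq R A B) end. ring.
Qed.

Lemma D_deriv H a r s : a = H - 1/2 -> 0 < a -> 0 < r -> r < s ->
  is_derive (fun s' => Derive (fun x => RLcov H x s') r) s
    (RInt (fun t => DPhi a (-r) 1 (-a) (a-1) s t) 0 r + rpow r a * (a * rpow s (a-1))).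
Proof.
  intros Ea Ha Hr Hrs.
  set (f := Phi a (-r) 1 (-a) (a-1)).
  apply is_derive_ext_loc with
    (fun s' => RInt (fun t => f s' t) 0 r + rpow r a * rpow s' a).
  { apply filter_imp with (2 := loc_gt r s Hrs). intros s' Hs'.
    rewrite (D_formula H a r s'); auto. }
  apply (is_derive_plus (K:=R_AbsRing) (V:=R_NormedModule)).
  - replace (RInt (fun t => DPhi a (-r) 1 (-a) (a-1) s t) 0 r)
      with (RInt (fun t => Derive (fun u => f u t) s) 0 r).
    2: { apply RInt_ext. intros t Ht.
         rewrite Rmin_left, Rmax_right in Ht by lra.
         unfold f. apply Phi_Derive. lra. }
    apply is_derive_RInt_param.
    + apply filter_imp with (2 := loc_gt r s Hrs). intros x0 Hx0 t Ht.
      rewrite Rmin_left, Rmax_right in Ht by lra.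
      eexists. apply Phi_derive. lra.
    + intros t Ht. rewrite Rmin_left, Rmax_right in Ht by lra.
      apply DerPhi_cont2d; auto; lra.
    + apply filter_imp with (2 := loc_gt r s Hrs). intros y Hy.
      apply (ex_RInt_continuous (V:=R_CompleteNormedModule)). intros z Hz.
      rewrite Rmin_left, Rmax_right in Hz by lra.
      apply Phi_cont_v; auto. right; lra.
  - apply is_derive_scal. apply rpow_derive. lra.
Qed.

Lemma IG_intro (f : R -> R) c l :
  (forall b, c <= b -> ex_RInt f c b) ->
  filterlim (fun b => RInt f c b) (Rbar_locally p_infty) (locally l) ->
  is_RInt_gen f (at_point c) (Rbar_locally p_infty) l.
Proof.
  intros Hex Hlim. unfold is_RInt_gen.
  apply filterlimi_lim_ext_loc with (fun ab => RInt f (fst ab) (snd ab)).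
  - exists (fun x => x = c) (fun y => c < y).
    + reflexivity.
    + exists c. auto.
    + intros x y -> Hy. simpl. apply (RInt_correct (V:=R_CompleteNormedModule)). apply Hex. lra.
  - intros P HP. specialize (Hlim P HP).
    exists (fun x => x = c) (fun y => P (RInt f c y)).
    + reflexivity.
    + exact Hlim.
    + intros x y -> Hy. exact Hy.
Qed.

Definition gd (a d : R) (u : R) : R := rpow u a * rpow (d + u) (a - 2).

Lemma gd_cont a d t : 0 < a -> 0 < d + t -> continuous (gd a d) t.
Proof.
  intros Ha Hp. apply continuous_ext with (fun v => Phi a d 0 1 (a-2) 0 v).
  - intros v. unfold Phi, gd. req. replace (d + 0 * 0 + v) with (d + v) by ring. ring.
  - apply Phi_cont_v; auto. right. lra.
Qed.

Lemma gd_exRInt a d p q : 0 < a -> 0 < d -> 0 <= p -> 0 <= q -> ex_RInt (gd a d) p q.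
Proof.
  intros Ha Hd Hp Hq. apply (ex_RInt_continuous (V:=R_CompleteNormedModule)).
  intros z Hz. apply gd_cont; auto.
  assert (Rmin p q >= 0) by (apply Rmin_case; lra). lra.
Qed.

Lemma gd_ge0 a d u : 0 <= gd a d u.
Proof. unfold gd. apply Rmult_le_pos; apply rpow_ge0. Qed.

Lemma rpow_lt_neg x y e : e < 0 -> 0 < x < y -> rpow y e < rpow x e.
Proof.
  intros He Hxy. rewrite !rpow_pos_eq by lra. unfold Rpower.
  apply exp_increasing. assert (ln x < ln y) by (apply ln_increasing; lra).
  apply Rmult_lt_gt_compat_neg_l; auto.
Qed.

Definition kk (a : R) (w : R) : R := rpow (1 + w) (2 * a - 2).
Definition KK (a : R) (w : R) : R := rpow (1 + w) (2 * a - 1) / (2 * a - 1).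

Lemma KK_derive a w : a < 1/2 -> 0 < 1 + w -> is_derive (KK a) w (kk a w).
Proof.
  intros Ha Hw. unfold KK, kk.
  assert (Hl : is_derive (fun w => 1 + w) w 1) by (auto_derive; auto; ring).
  pose proof (is_derive_comp (fun y => rpow y (2*a-1)) (fun w => 1 + w) w _ _ (rpow_derive _ (2*a-1) Hw) Hl) as HH.
  simpl in HH. unfold scal in HH; simpl in HH; unfold mult in HH; simpl in HH.
  replace (rpow (1 + w) (2 * a - 2)) with (/(2*a-1) * (1 * ((2 * a - 1) * rpow (1 + w) (2 * a - 1 - 1)))).
  2: { replace (2 * a - 1 - 1) with (2*a-2) by ring. field. lra. }
  apply is_derive_ext with (fun w => /(2*a-1) * rpow (1 + w) (2 * a - 1)).
  { intros t. req. unfold Rdiv. ring. }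
  apply is_derive_scal. exact HH.
Qed.

Lemma kk_cont a w : 0 < 1 + w -> continuous (kk a) w.
Proof.
  intros Hw. unfold kk.
  apply (continuous_comp (fun v => 1 + v) (fun y => rpow y (2*a-2))).
  + apply (continuous_plus (fun _ => 1) (fun v => v)).
    apply continuous_const. apply continuous_id.
  + apply rpow_cont_pos; auto.
Qed.

Lemma kk_RInt a u v : a < 1/2 -> 0 <= u -> 0 <= v -> RInt (kk a) u v = KK a v - KK a u.
Proof.
  intros Ha Hu Hv. apply is_RInt_unique.
  apply (is_RInt_derive (V:=R_CompleteNormedModule) (KK a) (kk a)).
  - intros x Hx. apply KK_derive; auto.
    assert (Rmin u v >= 0) by (apply Rmin_case; lra). lra.
  - intros x Hx. apply kk_cont.
    assert (Rmin u v >= 0) by (apply Rmin_case; lra). lra.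
Qed.

Lemma h_le_kk a w : 0 < a -> 0 <= w -> gd a 1 w <= kk a w.
Proof.
  intros Ha Hw. unfold gd, kk.
  replace (2 * a - 2) with (a + (a - 2)) by ring.
  rewrite <- rpow_plus by lra.
  apply Rmult_le_compat_r. apply rpow_ge0. apply rpow_le; lra.
Qed.

Lemma h_lim a : 0 < a -> a < 1/2 ->
  exists J0, filterlim (fun b => RInt (gd a 1) 0 b) (Rbar_locally p_infty) (locally J0).
Proof.
  intros Ha Ha2.
  apply (filterlim_locally_cauchy (U:=R_CompleteSpace) (F := Rbar_locally p_infty)).
  intros eps.
  set (c := eps * (1 - 2 * a)).
  assert (Hc : 0 < c) by (unfold c; apply Rmult_lt_0_compat; [apply cond_pos|lra]).
  set (M := exp (ln c / (2 * a - 1))).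
  assert (HM : 0 < M) by apply exp_pos.
  assert (HMc : rpow M (2 * a - 1) = c).
  { rewrite rpow_pos_eq by auto. unfold Rpower, M. rewrite ln_exp.
    replace ((2 * a - 1) * (ln c / (2 * a - 1))) with (ln c) by (field; lra).
    apply exp_ln; auto. }
  assert (Key : forall u v, M < u <= v -> Rabs (RInt (gd a 1) 0 v - RInt (gd a 1) 0 u) < eps).
  { intros u v Huv.
    assert (Hch := RInt_Chasles (V:=R_CompleteNormedModule) (gd a 1) 0 u v).
    rewrite <- Hch by (apply gd_exRInt; lra).
    change (plus (RInt (gd a 1) 0 u) (RInt (gd a 1) u v)) with (RInt (gd a 1) 0 u + RInt (gd a 1) u v).
    change (Rabs (RInt (gd a 1) 0 u + RInt (gd a 1) u v - RInt (gd a 1) 0 u) < eps).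
    assert (Ex : forall x y : R, x + y - x = y) by (intros; ring). rewrite Ex.
    assert (H0 : 0 <= RInt (gd a 1) u v).
    { apply RInt_ge_0. lra. apply gd_exRInt; lra. intros; apply gd_ge0. }
    assert (H1 : RInt (gd a 1) u v <= RInt (kk a) u v).
    { apply RInt_le. lra. apply gd_exRInt; lra.
      apply (ex_RInt_continuous (V:=R_CompleteNormedModule)). intros z Hz. apply kk_cont.
      assert (Rmin u v >= 0) by (apply Rmin_case; lra). lra.
      intros x Hx. apply h_le_kk; lra. }
    rewrite kk_RInt in H1 by lra. unfold KK in H1.
    assert (H2 : 0 <= rpow (1 + v) (2 * a - 1)) by apply rpow_ge0.
    assert (H3 : rpow (1 + u) (2 * a - 1) < rpow M (2 * a - 1)) by (apply rpow_lt_neg; lra).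
    rewrite HMc in H3.
    assert (H4 : rpow (1 + v) (2 * a - 1) / (2 * a - 1) - rpow (1 + u) (2 * a - 1) / (2 * a - 1)
                 = (rpow (1 + u) (2 * a - 1) - rpow (1 + v) (2 * a - 1)) / (1 - 2 * a)) by (field; lra).
    rewrite H4 in H1.
    assert (H5 : (rpow (1 + u) (2 * a - 1) - rpow (1 + v) (2 * a - 1)) / (1 - 2 * a) < eps).
    { apply Rmult_lt_reg_r with (1 - 2 * a). lra.
      unfold Rdiv. rewrite Rmult_assoc, Rinv_l by lra. fold c. lra. }
    rewrite Rabs_right by lra. lra. }
  exists (fun b => M < b). split.
  - exists M. auto.
  - intros u v Hu Hv. change (Rabs (RInt (gd a 1) 0 v - RInt (gd a 1) 0 u) < eps).
    destruct (Rle_dec u v).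
    + apply Key; lra.
    + rewrite Rabs_minus_sym. apply Key; lra.
Qed.

Lemma gd_scale a d w : 0 < d -> d * gd a d (d * w) = rpow d (2 * a - 1) * gd a 1 w.
Proof.
  intros Hd. unfold gd.
  replace (d + d * w) with (d * (1 + w)) by ring.
  rewrite !rpow_mult by auto.
  replace (2 * a - 1) with (1 + a + (a - 2)) by ring.
  rewrite <- !rpow_plus by auto.
  rewrite (rpow_pos_eq d 1), Rpower_1 by auto. ring.
Qed.

Lemma gd_RInt_scale a d b : 0 < a -> 0 < d -> 0 <= b ->
  RInt (gd a d) 0 b = rpow d (2 * a - 1) * RInt (gd a 1) 0 (b / d).
Proof.
  intros Ha Hd Hb.
  assert (Hex : ex_RInt (gd a d) (d * 0 + 0) (d * (b / d) + 0)).
  { apply gd_exRInt; auto; try lra. replace (d * (b / d) + 0) with b by (field; lra). auto. }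
  assert (HH := RInt_comp_lin (V:=R_CompleteNormedModule) (gd a d) d 0 0 (b / d) Hex).
  replace (d * 0 + 0) with 0 in HH by ring.
  replace (d * (b / d) + 0) with b in HH by (field; lra).
  rewrite <- HH.
  rewrite <- (RInt_scal (V:=R_CompleteNormedModule)).
  2: { apply gd_exRInt; auto; try lra. apply Rmult_le_pos; auto. left; apply Rinv_0_lt_compat; auto. }
  apply RInt_ext. intros x _. unfold scal; simpl. unfold mult; simpl.
  rewrite <- gd_scale by auto. f_equal. f_equal. ring.
Qed.

Lemma tail_lim a d r J0 : 0 < a -> 0 < d -> 0 < r ->
  filterlim (fun b => RInt (gd a 1) 0 b) (Rbar_locally p_infty) (locally J0) ->
  filterlim (fun b => RInt (gd a d) r b) (Rbar_locally p_infty)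
    (locally (rpow d (2 * a - 1) * J0 - RInt (gd a d) 0 r)).
Proof.
  intros Ha Hd Hr HJ.
  set (C := rpow d (2 * a - 1)). set (K := RInt (gd a d) 0 r).
  apply filterlim_ext_loc with (fun b => C * RInt (gd a 1) 0 (b / d) - K).
  { exists 0. intros b Hb. unfold C, K.
    rewrite <- gd_RInt_scale by lra.
    assert (Hch := RInt_Chasles (V:=R_CompleteNormedModule) (gd a d) 0 r b).
    rewrite <- Hch by (apply gd_exRInt; lra).
    change (plus (RInt (gd a d) 0 r) (RInt (gd a d) r b)) with (RInt (gd a d) 0 r + RInt (gd a d) r b).
    assert (Ex : forall x y : R, x + y - x = y) by (intros; ring). apply Ex. }
  apply (filterlim_comp _ _ _ (fun b => RInt (gd a 1) 0 (b / d)) (fun z => C * z - K) _ (locally J0)).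
  - apply (filterlim_comp _ _ _ (fun b => b / d) (fun y => RInt (gd a 1) 0 y) _ (Rbar_locally p_infty)).
    + intros P [M HM]. exists (M * d). intros x Hx. apply HM.
      apply Rmult_lt_reg_r with d; auto. unfold Rdiv. rewrite Rmult_assoc, Rinv_l by lra. lra.
    + exact HJ.
  - apply (ex_derive_continuous (K:=R_AbsRing) (V:=R_NormedModule) (fun z => C * z - K)).
    auto_derive. auto.
Qed.

Theorem lemmaA1 (H r s : R) (hH1 : 1/2 < H) (hH2 : H < 1)
  (hr : 0 < r) (hrs : r < s) :
  (forall s' : R, r < s' -> ex_derive (fun x => RLcov H x s') r) /\
  is_derive (fun s' => Derive (fun x => RLcov H x s') r) s
    (cst1 H * rpow r (H - 1/2) * rpow s (H - 3/2)
     + cst2 H * rpow (s - r) (2 * H - 2)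
     + cst3 H * RInt_gen (fun v => rpow v (H - 1/2) * rpow (s - r + v) (H - 5/2))
                       (at_point r) (Rbar_locally p_infty)).
Proof.
  split.
  { intros s' Hs'. eexists. apply RL_deriv; lra. }
  unfold cst1, cst2, cst3.
  replace (H - 3/2) with (H - 1/2 - 1) by lra.
  replace (H - 5/2) with (H - 1/2 - 2) by lra.
  replace (2 * H - 2) with (2 * (H - 1/2) - 1) by lra.
  assert (Ha : 0 < H - 1/2) by lra.
  assert (Ha2 : H - 1/2 < 1/2) by lra.
  assert (HD := D_deriv H (H - 1/2) r s eq_refl Ha hr hrs).
  set (a := H - 1/2) in *.
  set (d := s - r).
  assert (Hd : 0 < d) by (unfold d; lra).
  destruct (h_lim a Ha Ha2) as [J0 HJ0].
  assert (E1 : RInt_gen (fun u => rpow u a * rpow (1 + u) (a - 2)) (at_point 0) (Rbar_locally p_infty) = J0).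
  { apply is_RInt_gen_unique. apply (IG_intro (gd a 1)).
    - intros b Hb. apply gd_exRInt; lra.
    - exact HJ0. }
  assert (E2 : RInt_gen (fun v => rpow v a * rpow (d + v) (a - 2)) (at_point r) (Rbar_locally p_infty)
               = rpow d (2 * a - 1) * J0 - RInt (gd a d) 0 r).
  { apply is_RInt_gen_unique. apply (IG_intro (gd a d)).
    - intros b Hb. apply gd_exRInt; lra.
    - apply tail_lim; auto. }
  rewrite E1, E2.
  assert (E3 : RInt (fun t => DPhi a (-r) 1 (-a) (a-1) s t) 0 r = (- (a * (a - 1))) * RInt (gd a d) 0 r).
  { rewrite <- (RInt_scal (V:=R_CompleteNormedModule)) by (apply gd_exRInt; lra).
    apply RInt_ext. intros t _. unfold DPhi, gd, scal; simpl; unfold mult; simpl.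
    replace (- r + 1 * s + t) with (d + t) by (unfold d; ring).
    replace (a - 1 - 1) with (a - 2) by ring. ring. }
  rewrite E3 in HD.
  match goal with |- is_derive _ _ ?V =>
    replace V with (- (a * (a - 1)) * RInt (gd a d) 0 r + rpow r a * (a * rpow s (a - 1))) by ring end.
  exact HD.
Qed.
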